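(* Let $\mathbf A$ be a pseudo-Kleene lattice. Then $\mathbf A$ is super-paraorthomodular if and only if for all $x,y\in A$: $x\leq y$ implies $y\land(x\lor x')=x\lor(x'\land y)$.
   Context: A pseudo-Kleene lattice is an algebra $(A,\land,\lor,{}',0,1)$ that is a bounded lattice with an antitone involution ${}'$ ($x\leq y\Rightarrow y'\leq x'$, $x''=x$) satisfying $x\land x'\leq y\lor y'$. It is super-paraorthomodular if for all $x,y$: (SP1) $x\leq y$ and $x'\land y=(x\land x')\lor(y\land y')$ imply $y\land(x\lor x')=x\lor(y\land y')$; (SP2) $x\leq y$ implies $(x\land x')\lor(y\land y')=(x'\land y)\land(x'\land y)'$. *)

(* Defs.v *)
From HB Require Import structures.
From mathcomp Require Import all_boot all_order.
Set Implicit Arguments. Unset Strict Implicit. Unset Printing Implicit Defensive.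
Import Order.TTheory.
Local Open Scope order_scope.

Definition pseudo_kleene {d} (L : tbLatticeType d) (c : L -> L) : Prop :=
  (forall x y : L, x <= y -> c y <= c x) /\
  (forall x : L, c (c x) = x) /\
  (forall x y : L, x `&` c x <= y `|` c y).

Definition SP1 {d} (L : tbLatticeType d) (c : L -> L) : Prop :=
  forall x y : L, x <= y ->
    c x `&` y = (x `&` c x) `|` (y `&` c y) ->
    y `&` (x `|` c x) = x `|` (y `&` c y).

Definition SP2 {d} (L : tbLatticeType d) (c : L -> L) : Prop :=
  forall x y : L, x <= y ->
    (x `&` c x) `|` (y `&` c y) = (c x `&` y) `&` c (c x `&` y).

Definition super_paraorthomodular {d} (L : tbLatticeType d) (c : L -> L) : Prop :=
  SP1 c /\ SP2 c.

(* Main.v *)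
Require Import Defs.
From mathcomp Require Import all_boot all_order.
Import Order.TTheory.
Local Open Scope order_scope.

Lemma cI d (L : tbLatticeType d) (c : L -> L) : pseudo_kleene c ->
  forall x y, c (x `&` y) = c x `|` c y.
Proof.
move=> [hA [hI _]] x y; apply/le_anti/andP; split.
  rewrite -[c x `|` c y]hI; apply: (hA); rewrite lexI; apply/andP; split.
    by rewrite -[x in _ <= x]hI; apply: (hA); rewrite leUl.
  by rewrite -[y in _ <= y]hI; apply: (hA); rewrite leUr.
by rewrite leUx !hA ?leIl ?leIr.
Qed.

Lemma cU d (L : tbLatticeType d) (c : L -> L) : pseudo_kleene c ->
  forall x y, c (x `|` y) = c x `&` c y.
Proof.
move=> pk x y; have [hA [hI _]] := pk.
have -> : x `|` y = c (c x `&` c y) by rewrite (@cI _ _ _ pk) !hI.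
by rewrite hI.
Qed.

Lemma form2 d (L : tbLatticeType d) (c : L -> L) : pseudo_kleene c ->
  super_paraorthomodular c ->
  forall a b : L, a <= b -> b `&` (a `|` c b) = a `|` (b `&` c b).
Proof.
move=> pk [sp1 sp2] a b ab; have [hA [hI _]] := pk.
set v := b `&` (a `|` c b).
have av : a <= v by rewrite lexI ab leUl.
have vb : v <= b by rewrite leIl.
have E2 := sp2 a b ab.
rewrite (@cI _ _ _ pk) hI in E2.
have Ev : c a `&` v = (a `&` c a) `|` (b `&` c b) by rewrite E2 /v meetA.
have cvca : c v <= c a by apply: (hA).
have bbv : b `&` c b <= v `&` c v.
  rewrite lexI; apply/andP; split.
    by rewrite lexI leIl /= (le_trans (leIr _ _) (leUr _ _)).
  exact: le_trans (leIr _ _) (hA _ _ vb).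
have H1 : c a `&` v = (a `&` c a) `|` (v `&` c v).
  apply/le_anti/andP; split.
    rewrite Ev leUx leUl /=; exact: le_trans bbv (leUr _ _).
  rewrite leUx; apply/andP; split; rewrite lexI; apply/andP; split.
  - exact: leIr.
  - exact: (le_trans (leIl _ _) av).
  - exact: (le_trans (leIr _ _) cvca).
  - exact: leIl.
have C := sp1 a v av H1.
have vaa : v <= a `|` c a.
  apply: (le_trans) (leIr _ _) _; rewrite leUx leUl /=.
  exact: le_trans (hA _ _ ab) (leUr _ _).
apply/le_anti/andP; split; last first.
  rewrite leUx lexI ab leUl /= lexI leIl /=.
  exact: le_trans (leIr _ _) (leUr _ _).
have -> : v = v `&` (a `|` c a) by apply/esym/meet_idPl.
rewrite C leUx leUl /=.
have : v `&` c v <= c a `&` v by rewrite lexI leIl andbT (le_trans (leIr _ _) cvca).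
rewrite Ev => h; apply: (le_trans) h _; rewrite leUx leUr andbT.
exact: le_trans (leIl _ _) (leUl _ _).
Qed.

Theorem theorem3p4 (d : Order.disp_t) (L : tbLatticeType d) (c : L -> L) :
  pseudo_kleene c ->
  (super_paraorthomodular c <->
   (forall x y : L, x <= y -> y `&` (x `|` c x) = x `|` (c x `&` y))).
Proof.
move=> pk; have [hA [hI kl]] := pk; split.
  move=> sp x y xy.
  have := @form2 _ _ _ pk sp _ _ (hA _ _ xy); rewrite hI => E.
  have := congr1 c E; rewrite (@cI _ _ _ pk) (@cU _ _ _ pk) (@cU _ _ _ pk) (@cI _ _ _ pk) !hI => E'.
  by rewrite -E' meetC.
move=> H.
have f2 : forall a b : L, a <= b -> b `&` (a `|` c b) = a `|` (b `&` c b).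
  move=> a b ab; have := H _ _ (hA _ _ ab).
  move/(congr1 c); rewrite (@cI _ _ _ pk) (@cU _ _ _ pk) (@cU _ _ _ pk) (@cI _ _ _ pk) !hI => E.
  by rewrite E joinC.
split.
  move=> x y xy hyp; rewrite H // hyp joinA.
  by rewrite (meetKU (c x) x).
move=> x y xy.
rewrite (@cI _ _ _ pk) hI -meetA f2 //.
have yy : y `&` c y <= c x by apply: (le_trans) (leIr _ _) (hA _ _ xy).
have := f2 _ _ yy; rewrite hI (joinC (y `&` c y)) => ->.
by rewrite joinC (meetC (c x)).
Qed.
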